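(* Let $c$ and $d$ be two primitive combinatorial closed curves that are not freely homotopic. Then the sequence of double points of a double path of $(c,d)$ contains no double point more than once. Moreover, every double path of $(c,d)$ has length less than $|c|+|d|-1$.
   Context: A combinatorial closed curve $c$ of length $|c|$ has vertices $c(i)$ and arcs $c[i,i+1]$, $i\in\mathbb{Z}/|c|\mathbb{Z}$. It is primitive if its free homotopy class is not a proper power of another class. A forward index path of length $\ell$ of $c$ is $(i,i+1,\dots,i+\ell)$ (indices mod $|c|$), with image path $(c[i,i+1],\dots,c[i+\ell-1,i+\ell])$. A double point of $(c,d)$ is a pair $(i,j)\in\mathbb{Z}/|c|\mathbb{Z}\times\mathbb{Z}/|d|\mathbb{Z}$ with $c(i)=d(j)$. A double path of $(c,d)$ of length $\ell$ is a pair of forward index paths $((i,\dots,i+\ell)_c,(j,\dots,j+\ell)_d)$ with identical image paths; its sequence of double points is $(i+k,j+k)$, $k=0,\dots,\ell$. *)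

(* Defs.v *)
From mathcomp Require Import all_boot.
From Stdlib Require Import Relation_Operators.
Set Implicit Arguments. Unset Strict Implicit. Unset Printing Implicit Defensive.

Section Walks.
Variables (V D : Type) (dtail dhead : D -> V).

Fixpoint walkb (u : V) (s : seq D) : Prop :=
  match s with
  | [::] => True
  | a :: s' => dtail a = u /\ walkb (dhead a) s'
  end.

Definition walk_end (u : V) (s : seq D) : V := last u (map dhead s).

Definition closed_walk (u : V) (s : seq D) : Prop :=
  walkb u s /\ walk_end u s = u.

Definition face_ok (f : seq D) : Prop :=
  match f with
  | a :: _ => closed_walk (dtail a) f
  | [::] => False
  end.
End Walks.

(* A finite graph whose arcs are represented by pairs of opposite darts
   (drev: fixed-point free involution), together with the boundary walks of
   its faces; every dart occurs exactly once on the face boundaries. *)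
Record comb_surface := CombSurface {
  vertex : finType;
  dart : finType;
  dtail : dart -> vertex;
  dhead : dart -> vertex;
  drev : dart -> dart;
  drevK : involutive drev;
  drev_neq : forall a, drev a != a;
  drev_tail : forall a, dtail (drev a) = dhead a;
  faces : seq (seq dart);
  faces_ok : forall f, f \in faces -> face_ok dtail dhead f;
  faces_partition : forall a, count_mem a (flatten faces) = 1%N
}.

Section Homotopy.
Variable S : comb_surface.

(* a (possibly empty) closed walk with its base vertex *)
Definition cwalk := (vertex S * seq (dart S))%type.
Definition is_cwalk (w : cwalk) : Prop := closed_walk (@dtail S) (@dhead S) w.1 w.2.

Inductive hstep : cwalk -> cwalk -> Prop :=
  (* change of base point along the curve *)
  | hs_rot (v : vertex S) (a : dart S) (s : seq (dart S)) :
      hstep (v, a :: s) (dhead a, rcons s a)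
  | hs_spur (v : vertex S) (s1 s2 : seq (dart S)) (a : dart S) :
      hstep (v, s1 ++ s2) (v, s1 ++ a :: drev a :: s2)
  | hs_face (v : vertex S) (s1 s2 : seq (dart S)) (f : seq (dart S)) (k : nat) :
      f \in faces S -> hstep (v, s1 ++ s2) (v, s1 ++ rot k f ++ s2).

Definition hstep_ok (w1 w2 : cwalk) : Prop :=
  [/\ is_cwalk w1, is_cwalk w2 & hstep w1 w2].

Definition whomotopic (w1 w2 : cwalk) : Prop :=
  clos_refl_sym_trans cwalk hstep_ok w1 w2.

(* c(i) = dtail of the i-th dart, arc c[i,i+1] = i-th dart, indices mod |c| *)
Record curve := Curve {
  c0 : dart S;
  crest : seq (dart S);
  cclosed : face_ok (@dtail S) (@dhead S) (c0 :: crest)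
}.

Definition cdarts (c : curve) : seq (dart S) := c0 c :: crest c.

Definition clen (c : curve) : nat := size (cdarts c).

Definition carc (c : curve) (i : nat) : dart S := nth (c0 c) (cdarts c) (i %% clen c).

Definition cvert (c : curve) (i : nat) : vertex S := dtail (carc c i).

Definition cwalk_of (c : curve) : cwalk := (cvert c 0, cdarts c).

Definition freely_homotopic (c d : curve) : Prop := whomotopic (cwalk_of c) (cwalk_of d).

Definition wpow (w : cwalk) (k : nat) : cwalk := (w.1, flatten (nseq k w.2)).

Definition primitive (c : curve) : Prop :=
  ~ exists (w : cwalk) (k : nat), [/\ is_cwalk w, (2 <= k)%N & whomotopic (cwalk_of c) (wpow w k)].

Definition double_path (c d : curve) (i j l : nat) : Prop :=
  [/\ (i < clen c)%N, (j < clen d)%N,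
      (forall k, (k <= l)%N -> cvert c (i + k) = cvert d (j + k)) &
      (forall k, (k < l)%N -> carc c (i + k) = carc d (j + k))].

Definition dpoint (c d : curve) (i j k : nat) : nat * nat :=
  ((i + k) %% clen c, (j + k) %% clen d)%N.

End Homotopy.

(* Main.v *)
Require Import Defs.
From mathcomp Require Import all_boot zify.
From Stdlib Require Import Relation_Operators.
Set Implicit Arguments. Unset Strict Implicit.


Section FW.
Variable A : Type.

Lemma per_mod (f : nat -> A) p L : 0 < p ->
  (forall x, x + p < L -> f x = f (x + p)) ->
  forall x, x < L -> f x = f (x %% p).
Proof.
move=> p0 hp x; elim/ltn_ind: x => x IH xL.
case: (ltnP x p) => hx; first by rewrite modn_small.
have e : x = (x - p) + p by rewrite subnK.
have -> : x %% p = (x - p) %% p by rewrite -(modnDr (x-p) p) -e.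
rewrite {1}e -hp; last by rewrite -e.
apply: IH; lia.
Qed.

Lemma fine_wilf n : forall p q (f : nat -> A) L, p + q <= n -> 0 < p -> 0 < q ->
  (forall x, x + p < L -> f x = f (x + p)) ->
  (forall x, x + q < L -> f x = f (x + q)) ->
  p + q - gcdn p q <= L -> forall x, x < L -> f x = f (x %% gcdn p q).
Proof.
elim: n => [|n IH] p q f L; first by lia.
move=> hn p0 q0 hp hq hL.
wlog pq : p q hn p0 q0 hp hq hL / p <= q.
  move=> W; case: (leqP p q) => h; first by apply: W.
  rewrite gcdnC; apply: W => //; [lia|rewrite gcdnC; lia|lia].
have : p < q \/ p = q by lia.
case=> [lt|eq]; last first.
  by subst q; rewrite gcdnn; apply: per_mod.
have gp : gcdn p q %| p by apply: dvdn_gcdl.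
have gq : gcdn p q %| q by apply: dvdn_gcdr.
have g0 : 0 < gcdn p q by rewrite gcdn_gt0 p0.
have gle : gcdn p q <= p by apply: dvdn_leq.
have gqp : gcdn p q <= q - p.
  apply: dvdn_leq; first by lia. by apply: dvdn_sub.
have eg : gcdn p (q - p) = gcdn p q.
  by rewrite -{2}(subnK (ltnW lt)) gcdnDr.
have IH' := IH p (q - p) f (L - p).
rewrite eg in IH'.
have H1 : forall y, y < L - p -> f y = f (y %% gcdn p q).
  apply: IH'; try lia.
  - by move=> x hx; apply: hp; lia.
  - move=> x hx.
    rewrite hq; last by lia.
    have -> : x + q = x + (q - p) + p by lia.
    rewrite -hp //; lia.
move=> x xL.
rewrite (per_mod p0 hp xL) H1; last first.
  have := ltn_pmod x p0; lia.
by rewrite -(modn_dvdm x gp).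
Qed.
End FW.

Section Seqf.
Variable T : Type.
Fixpoint seqf (F : nat -> T) n : seq T :=
  if n is n'.+1 then F 0 :: seqf (fun k => F k.+1) n' else [::].

Lemma seqf_ext n : forall F G, (forall k, k < n -> F k = G k) -> seqf F n = seqf G n.
Proof.
elim: n => [//|n IH] F G h /=; rewrite h // (IH (fun k => F k.+1) (fun k => G k.+1)) //.
by move=> k hk; apply: h.
Qed.

Lemma size_seqf n : forall F, size (seqf F n) = n.
Proof. by elim: n => [//|n IH] F /=; rewrite IH. Qed.

Lemma nth_seqf n : forall F x k, k < n -> nth x (seqf F n) k = F k.
Proof.
elim: n => [//|n IH] F x [|k] //= hk; by rewrite IH.
Qed.

Lemma seqf_add m : forall n F, seqf F (m + n) = seqf F m ++ seqf (fun k => F (m + k)) n.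
Proof.
elim: m => [|m IH] n F /=.
  by apply: seqf_ext.
rewrite IH; congr (_ :: _ ++ _); apply: seqf_ext => k _; by rewrite addSn.
Qed.

Lemma seqf_rcons n F : seqf F n.+1 = rcons (seqf F n) (F n).
Proof. by rewrite -addn1 seqf_add cats1 /= addn0. Qed.

Lemma seqf_pow m F a : (forall x, F (x + m) = F x) ->
  seqf F (a * m) = flatten (nseq a (seqf F m)).
Proof.
move=> hF; elim: a => [//|a IH].
rewrite mulSn seqf_add /= -IH; congr (_ ++ _); apply: seqf_ext => k _.
by rewrite addnC hF.
Qed.
End Seqf.

Section Walk.
Variables (V D : Type) (dt dh : D -> V).

Lemma seqf_walk n : forall F : nat -> D, (forall k, dh (F k) = dt (F k.+1)) ->
  walkb dt dh (dt (F 0)) (seqf F n) /\ walk_end dh (dt (F 0)) (seqf F n) = dt (F n).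
Proof.
elim: n => [|n IH] F hF //=.
have [h1 h2] := IH (fun k => F k.+1) (fun k => hF k.+1).
rewrite -hF in h1 h2; split => //.
Qed.

Lemma walk_nth s : forall u x m, walkb dt dh u s -> m.+1 < size s ->
  dh (nth x s m) = dt (nth x s m.+1).
Proof.
elim: s => [//|a s IH] u x [|m] /= [h1 h2] hm.
  by case: s h2 {IH} hm => [//|b s] /= [->].
by apply: (IH (dh a)).
Qed.
End Walk.

Section Curves.
Variable S : comb_surface.
Implicit Types c d : curve S.

Lemma clen_gt0 c : 0 < clen c.
Proof. by []. Qed.

Lemma carc_mod c n : carc c (n %% clen c) = carc c n.
Proof. by rewrite /carc modn_mod. Qed.

Lemma chead c n : dhead (carc c n) = cvert c n.+1.
Proof.
have := cclosed c; rewrite /face_ok /closed_walk => -[hw he].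
rewrite /cvert /carc modnS.
have hp := clen_gt0 c.
have hm := ltn_pmod n hp.
case: ifP => hd.
  have e : n %% clen c = (clen c).-1.
    have : clen c %| (n %% clen c).+1.
      by rewrite /dvdn -addn1 modnDml addn1.
    move/(dvdn_leq (ltn0Sn _)); lia.
  rewrite e /= /cdarts -[size (crest c)]/((size (c0 c :: crest c)).-1) nth_last /=.
  by move: he; rewrite /walk_end /= (last_map (@dhead S) (crest c) (c0 c)).
apply: (@walk_nth _ _ _ _ _ _ _ _ hw).
have : (n %% clen c).+1 != clen c.
  apply/negP => /eqP e; move: hd; by rewrite /dvdn -addn1 -modnDml addn1 e modnn.
rewrite /clen /cdarts in hm *; lia.
Qed.

Lemma carc_add c n : carc c (n + clen c) = carc c n.
Proof. by rewrite -carc_mod modnDr carc_mod. Qed.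

Lemma cvert_add c n : cvert c (n + clen c) = cvert c n.
Proof. by rewrite /cvert carc_add. Qed.

Definition R c n : cwalk S := (cvert c n, seqf (fun k => carc c (n + k)) (clen c)).

Lemma seqf_cwalk (F : nat -> dart S) m : (forall k, dhead (F k) = dtail (F k.+1)) ->
  dtail (F m) = dtail (F 0) -> is_cwalk (dtail (F 0), seqf F m).
Proof.
move=> h1 h2; have [w e] := seqf_walk m h1.
by split => //=; rewrite e.
Qed.

Lemma R_cwalk c n : is_cwalk (R c n).
Proof.
rewrite /R.
have -> : cvert c n = dtail (carc c (n + 0)) by rewrite addn0.
apply: (seqf_cwalk (F := fun k => carc c (n + k))).
  by move=> k; rewrite chead addnS.
by rewrite carc_add addn0.
Qed.

Lemma R_step c n : hstep_ok (R c n) (R c n.+1).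
Proof.
split; try exact: R_cwalk.
have hp := clen_gt0 c.
rewrite /R.
have -> : clen c = (clen c).-1.+1 by rewrite prednK.
rewrite [seqf _ (clen c).-1.+1]/= seqf_rcons addn0.
set s := seqf _ _.
have -> : seqf (fun k => carc c (n.+1 + k)) (clen c).-1 = s.
  by apply: seqf_ext => k _; rewrite addnS addSn.
have -> : carc c (n.+1 + (clen c).-1) = carc c n.
  rewrite addSn -addnS prednK //; exact: carc_add.
rewrite -chead; exact: hs_rot.
Qed.

Lemma R0 c : R c 0 = cwalk_of c.
Proof.
rewrite /R /cwalk_of; congr (_, _).
apply: (@eq_from_nth _ (c0 c)); first by rewrite size_seqf.
move=> k; rewrite size_seqf => hk; rewrite nth_seqf // add0n /carc modn_small //.
Qed.

Lemma R_hom c n : whomotopic (cwalk_of c) (R c n).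
Proof.
rewrite -R0; elim: n => [|n IH]; first exact: rst_refl.
apply: rst_trans IH _; apply: rst_step; exact: R_step.
Qed.
End Curves.

Lemma lcm_bound p q : 0 < p -> 0 < q -> p + q - gcdn p q <= lcmn p q.
Proof.
move=> p0 q0.
have g0 : 0 < gcdn p q by rewrite gcdn_gt0 p0.
have gq : gcdn p q <= q by apply: dvdn_leq => //; apply: dvdn_gcdr.
have [a ea] : exists a, p = a * gcdn p q.
  by exists (p %/ gcdn p q); rewrite divnK // dvdn_gcdl.
have -> : lcmn p q = a * q.
  by rewrite /lcmn {1}ea mulnAC mulnK.
have a0 : 0 < a by move: p0; rewrite ea; case: a {ea}.
nia.
Qed.

Section Main.
Variable S : comb_surface.

Lemma pow_len (c : curve S) n g : primitive c -> 0 < g -> g %| clen c ->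
  (forall x, carc c (n + x) = carc c (n + x %% g)) -> clen c = g.
Proof.
move=> pc g0 gd hF.
set F := fun k => carc c (n + k).
have Fp : forall x, F (x + g) = F x.
  by move=> x; rewrite /F hF modnDr -hF.
set a := clen c %/ g.
have ea : clen c = a * g by rewrite divnK.
have hR : R c n = wpow (cvert c n, seqf F g) a.
  rewrite /R /wpow; congr (_, _); rewrite {1}ea; exact: seqf_pow.
have hw : is_cwalk (cvert c n, seqf F g).
  have -> : cvert c n = dtail (F 0) by rewrite /F addn0.
  apply: seqf_cwalk; first by move=> k; rewrite /F chead addnS.
  by rewrite -{1}(add0n g) Fp.
have a0 : 0 < a by move: (clen_gt0 c); rewrite ea; case: (a).
case: (leqP a 1) => ha.
  rewrite ea; have -> : a = 1 by lia. by rewrite mul1n.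
exfalso; apply: pc; exists (cvert c n, seqf F g), a; split => //.
rewrite -hR; exact: R_hom.
Qed.

Lemma key (c d : curve S) i j l : primitive c -> primitive d -> ~ freely_homotopic c d ->
  double_path c d i j l -> clen c + clen d - gcdn (clen c) (clen d) <= l -> False.
Proof.
move=> pc pd nh [ic jd hv ha] hl.
set p := clen c in hl *; set q := clen d in hl *.
set g := gcdn p q.
have p0 : 0 < p := clen_gt0 c.
have q0 : 0 < q := clen_gt0 d.
have g0 : 0 < g by rewrite gcdn_gt0 p0.
have gp : g %| p by apply: dvdn_gcdl.
have gq : g %| q by apply: dvdn_gcdr.
have gle : g <= q by apply: dvdn_leq.
have gle' : g <= p by apply: dvdn_leq.
set F := fun x => carc c (i + x).
set G := fun x => carc d (j + x).
have Fmod : forall x, F x = F (x %% p).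
  by move=> x; rewrite /F -carc_mod -[in RHS]carc_mod -/p modnDmr.
have Gmod : forall x, G x = G (x %% q).
  by move=> x; rewrite /G -carc_mod -[in RHS]carc_mod -/q modnDmr.
have Fper : forall x, F (x + p) = F x by move=> x; rewrite Fmod modnDr -Fmod.
have Gper : forall x, G (x + q) = G x by move=> x; rewrite Gmod modnDr -Gmod.
have FG : forall x, x < l -> F x = G x by move=> x hx; apply: ha.
have fw := @fine_wilf _ (p + q) p q F l (leqnn _) p0 q0.
have fw' : forall x, x < l -> F x = F (x %% g).
  apply: fw => //.
  - move=> x hx; rewrite FG; last by lia.
    by rewrite FG // (Gper x).
have Fg : forall x, F x = F (x %% g).
  move=> x; rewrite Fmod fw'; last by have := ltn_pmod x p0; lia.
  by rewrite -(modn_dvdm x gp).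
have GF : forall x, G x = F x.
  move=> x; rewrite Gmod -FG; last by have := ltn_pmod x q0; lia.
  by rewrite Fg [RHS]Fg (modn_dvdm x gq).
have hc : p = g.
  apply: (pow_len (n:=i) pc) => // x; exact: Fg.
have hd : q = g.
  apply: (pow_len (n:=j) pd) => // x; have := GF x; have := GF (x %% g); rewrite /G => -> ->; exact: Fg.
apply: nh.
have e : R c i = R d j.
  rewrite /R -/p -/q hc hd; congr (_, _).
    by have := hv 0 (leq0n _); rewrite !addn0.
  apply: seqf_ext => k _; exact: (esym (GF k)).
apply: rst_trans (R_hom c i) _; rewrite e; apply: rst_sym; exact: R_hom.
Qed.
End Main.

Theorem lemma19 (S : comb_surface) (c d : curve S) :
  primitive c -> primitive d -> ~ freely_homotopic c d ->
  forall i j l : nat, double_path c d i j l ->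
    (forall k1 k2 : nat, (k1 <= l)%N -> (k2 <= l)%N ->
        dpoint c d i j k1 = dpoint c d i j k2 -> k1 = k2)
    /\ (l < clen c + clen d - 1)%N.
Proof.
move=> pc pd nh i j l dp.
have p0 := clen_gt0 c; have q0 := clen_gt0 d.
split; last first.
  rewrite ltnNge; apply/negP => hl; apply: (key pc pd nh dp).
  have : 0 < gcdn (clen c) (clen d) by rewrite gcdn_gt0 p0.
  lia.
move=> k1 k2 h1 h2 e.
wlog lt : k1 k2 h1 h2 e / k1 <= k2.
  move=> W; case: (leqP k1 k2) => h; first exact: W.
  by apply/esym; apply: W => //; lia.
case: (ltnP k1 k2) => lt'; last by lia.
exfalso; apply: (key pc pd nh dp).
case: e => e1 e2.
have dc : clen c %| k2 - k1.
  rewrite -eqn_mod_dvd // -(eqn_modDl i); by apply/eqP.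
have dd : clen d %| k2 - k1.
  rewrite -eqn_mod_dvd // -(eqn_modDl j); by apply/eqP.
have : lcmn (clen c) (clen d) %| k2 - k1 by rewrite dvdn_lcm dc dd.
move/dvdn_leq => hle.
have := lcm_bound p0 q0.
have : lcmn (clen c) (clen d) <= k2 - k1 by apply: hle; lia.
lia.
Qed.
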